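(* Under the standing assumptions of the context, $\|m_l'-(m^M)'\|_C=O(\mu(l))$ as $l\to\infty$.
   Context: Let $\theta$ be odd, non-decreasing, $C^2$, with $\theta(\omega)=\pi/4$ for $\omega>\pi/3$; fix $\pi/3\le\omega_0<\pi/2$. Meyer scaling function (Fourier transform): $\widehat{\varphi^M}(\omega)=1$ for $|\omega|\le2\omega_0$, $=\cos(\frac\pi4+\theta(\frac{\pi}{3(\pi-2\omega_0)}(|\omega|-\pi)))$ for $2\omega_0<|\omega|\le2\pi-2\omega_0$, $=0$ otherwise. Meyer mask: $2\pi$-periodic $m^M$ with $m^M(\omega)=\widehat{\varphi^M}(2\omega)$ on $[-\pi,\pi]$. $\|\cdot\|_C$: sup norm on $[-\pi,\pi]$. A linear method of summation $(\lambda_{n,k})$ maps $f$ with Fourier coefficients $a_k,b_k$ to $u_n(f,\omega)=\frac{a_0}2+\sum_{k=1}^n\lambda_{n,k}(a_k\cos k\omega+b_k\sin k\omega)$. $m^M_l:=m^M/(\cos\frac\omega2)^{2l}$. Standing assumptions: a method and a sequence $n(l)$ are fixed with $u_l:=u_{n(l)}(m^M_l,\cdot)$, $u_{1,l}:=u_{n(l)}((m^M_l)',\cdot)$ satisfying $\alpha(l):=\|u_l-m^M_l\|_C=o(l^{-1})$, $\gamma(l):=\|u_{1,l}-(m^M_l)'\|_C=o(1)$, $u_l(\pi)\ne0$; $l_0$ is fixed with $\inf_{l\ge l_0}|u_l(0)|>0$ and $l\ge l_0$. $\mu(l):=l\alpha(l)+\gamma(l)$. $m_l(\omega):=(\cos\frac\omega2)^{2l}u_l(\omega)/u_l(0)$.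 *)

(* Defs.v *)
From Stdlib Require Import Reals.
From Coquelicot Require Import Coquelicot.
Open Scope R_scope.

(* Meyer scaling function (Fourier transform), parameters theta, w0. *)
Definition phiM (theta : R -> R) (w0 : R) (w : R) : R :=
  if Rle_dec (Rabs w) (2 * w0) then 1
  else if Rle_dec (Rabs w) (2 * PI - 2 * w0) then
    cos (PI / 4 + theta (PI / (3 * (PI - 2 * w0)) * (Rabs w - PI)))
  else 0.

Definition redpi (w : R) : R := w - 2 * PI * IZR (Int_part ((w + PI) / (2 * PI))).

(* Meyer mask: 2*PI-periodic, equal to phiM(2 w) on [-PI, PI]. *)
Definition mM (theta : R -> R) (w0 : R) (w : R) : R := phiM theta w0 (2 * redpi w).

(* m^M_l := m^M / (cos (w/2))^(2l)  (at w = PI (mod 2PI), m^M vanishes and the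
   Rocq value x/0 = 0 gives the continuous extension by 0). *)
Definition mMl (theta : R -> R) (w0 : R) (l : nat) (w : R) : R :=
  mM theta w0 w / (cos (w / 2)) ^ (2 * l).

Definition fa (f : R -> R) (k : nat) : R := / PI * RInt (fun t => f t * cos (INR k * t)) (- PI) PI.
Definition fb (f : R -> R) (k : nat) : R := / PI * RInt (fun t => f t * sin (INR k * t)) (- PI) PI.

Definition usum (lam : nat -> nat -> R) (n : nat) (f : R -> R) (w : R) : R :=
  fa f 0 / 2 + sum_n_m (fun k => lam n k * (fa f k * cos (INR k * w) + fb f k * sin (INR k * w))) 1 n.

Definition supC (f : R -> R) : R :=
  real (Lub_Rbar (fun y => exists x, - PI <= x <= PI /\ y = Rabs (f x))).

Section Std.
Variables (theta : R -> R) (w0 : R) (lam : nat -> nat -> R) (nl : nat -> nat).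

Definition ul (l : nat) : R -> R := usum lam (nl l) (mMl theta w0 l).
Definition u1l (l : nat) : R -> R := usum lam (nl l) (Derive (mMl theta w0 l)).
Definition alpha (l : nat) : R := supC (fun w => ul l w - mMl theta w0 l w).
Definition gamma (l : nat) : R := supC (fun w => u1l l w - Derive (mMl theta w0 l) w).
Definition mu (l : nat) : R := INR l * alpha l + gamma l.
Definition ml (l : nat) (w : R) : R := (cos (w / 2)) ^ (2 * l) * ul l w / ul l 0.
End Std.

(* Main.v *)
Require Import Defs.
From Stdlib Require Import Reals.
From Coquelicot Require Import Coquelicot.
From Stdlib Require Import Lra Lia FunctionalExtensionality.
Open Scope R_scope.


Definition C1 (f : R -> R) := forall y, ex_derive f y /\ continuous (Derive f) y.
Definition LC1 (f : R -> R) x := locally x (fun y => ex_derive f y) /\ continuous (Derive f) x.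

Lemma exd_cont (f : R -> R) x : ex_derive f x -> continuous f x.
Proof. intros H; apply (ex_derive_continuous f x H). Qed.

Lemma C1_LC1 f x : C1 f -> LC1 f x.
Proof. intros H; split; [apply filter_forall; intros y; apply H | apply H]. Qed.

Lemma LC1_ext f h x : locally x (fun y => f y = h y) -> LC1 h x -> LC1 f x.
Proof.
  intros He [Hd Hc]. apply locally_locally in He.
  split.
  - apply (filter_imp (fun y => locally y (fun z => f z = h z) /\ ex_derive h y)).
    + intros y [H1 H2]. apply (ex_derive_ext_loc h f y); [|exact H2].
      apply (filter_imp _ _ (fun z Hz => eq_sym Hz) H1).
    + apply filter_and; assumption.
  - apply (continuous_ext_loc _ (Derive h)); [|exact Hc].
    apply (filter_imp _ _ (fun y Hy => eq_sym (Derive_ext_loc _ _ _ Hy)) He).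
Qed.

Lemma C1_const c : C1 (fun _ => c).
Proof. intros y; split; [apply ex_derive_const|].
  apply (continuous_ext (fun _ => 0)); [intros; rewrite Derive_const; auto|apply continuous_const]. Qed.

Lemma C1_affine a b : C1 (fun y => a * y + b).
Proof. intros y; split; [auto_derive; auto|].
  apply (continuous_ext (fun _ => a)); [|apply continuous_const].
  intros z; apply sym_eq, is_derive_unique; auto_derive; auto; ring. Qed.

Lemma C1_comp f h : C1 f -> C1 h -> C1 (fun y => f (h y)).
Proof. intros Hf Hh y; split.
  - apply ex_derive_comp; [apply Hf|apply Hh].
  - apply (continuous_ext (fun z => Derive h z * Derive f (h z))).
    + intros z; rewrite (Derive_comp f h z); auto; [apply Hf|apply Hh].
    + apply (continuous_mult (fun z => Derive h z) (fun z => Derive f (h z))); [apply Hh|].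
      apply continuous_comp; [apply exd_cont, Hh| apply Hf].
Qed.

Lemma C1_plus f h : C1 f -> C1 h -> C1 (fun y => f y + h y).
Proof. intros Hf Hh y; split.
  - apply (ex_derive_plus f h); [apply Hf|apply Hh].
  - apply (continuous_ext (fun z => Derive f z + Derive h z)).
    + intros z; rewrite (Derive_plus f h z); auto; [apply Hf|apply Hh].
    + apply (continuous_plus (fun z => Derive f z) (fun z => Derive h z)); [apply Hf|apply Hh].
Qed.

Lemma C1_mult f h : C1 f -> C1 h -> C1 (fun y => f y * h y).
Proof. intros Hf Hh y; split.
  - apply (ex_derive_mult f h); [apply Hf|apply Hh].
  - apply (continuous_ext (fun z => Derive f z * h z + f z * Derive h z)).
    + intros z; rewrite (Derive_mult f h z); auto; [apply Hf|apply Hh].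
    + apply (continuous_plus (fun z => Derive f z * h z) (fun z => f z * Derive h z)).
      * apply (continuous_mult (fun z => Derive f z) h); [apply Hf|apply exd_cont, Hh].
      * apply (continuous_mult f (fun z => Derive h z)); [apply exd_cont, Hf|apply Hh].
Qed.

Lemma C1_cos : C1 cos.
Proof. intros y; split; [auto_derive; auto|].
  apply (continuous_ext (fun z => - sin z)).
  - intros z; apply sym_eq, is_derive_unique; auto_derive; auto; ring.
  - apply (continuous_opp sin). apply continuity_pt_filterlim, continuity_sin.
Qed.

Lemma C1_pow f n : C1 f -> C1 (fun y => f y ^ n).
Proof. intros Hf; induction n as [|n IH]; simpl.
  - apply C1_const.
  - apply (C1_mult f (fun y => f y ^ n)); auto.
Qed.

Lemma LC1_div f q x : LC1 f x -> C1 q -> q x <> 0 -> LC1 (fun y => f y / q y) x.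
Proof.
  intros [Hd Hc] Hq Hx.
  assert (Hqc : continuous q x) by (apply exd_cont, Hq).
  assert (Hnz : locally x (fun y => q y <> 0)).
  { destruct (proj1 (continuity_pt_locally q x) (proj2 (continuity_pt_filterlim q x) Hqc)
       (mkposreal _ (Rabs_pos_lt _ Hx))) as [d Hd'].
    exists d; intros y Hy; specialize (Hd' y Hy); simpl in Hd'.
    intros E; rewrite E in Hd'. rewrite Rminus_0_l, Rabs_Ropp in Hd'. lra. }
  split.
  - apply (filter_imp (fun y => ex_derive f y /\ q y <> 0)); [|apply filter_and; auto].
    intros y [H1 H2]; apply ex_derive_div; auto; apply Hq.
  - apply (continuous_ext_loc _ (fun y => (Derive f y * q y - f y * Derive q y) / q y ^ 2)).
    + apply (filter_imp (fun y => ex_derive f y /\ q y <> 0)); [|apply filter_and; auto].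
      intros y [H1 H2]; rewrite Derive_div; auto; apply Hq.
    + assert (Hfc : continuous f x) by (apply exd_cont; apply locally_singleton in Hd; auto).
      unfold Rdiv.
      apply (continuous_mult (fun y => Derive f y * q y - f y * Derive q y) (fun y => / q y ^ 2)).
      * apply (continuous_plus (fun y => Derive f y * q y) (fun y => opp (f y * Derive q y))).
        -- apply (continuous_mult (fun z => Derive f z) q); auto.
        -- apply (continuous_opp (fun y => f y * Derive q y)).
           apply (continuous_mult f (fun z => Derive q z)); auto; apply Hq.
      * apply continuous_Rinv_comp; [|apply pow_nonzero; auto].
        apply (continuous_ext (fun y => q y * (q y * 1))); [intros; simpl; auto|].
        apply (continuous_mult q (fun y => q y * 1)); auto.
        apply (continuous_mult q (fun _ => 1)); auto; apply continuous_const.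
Qed.


Lemma loc_get (P : R -> Prop) x : locally x P -> exists d, 0 < d /\ forall y, Rabs (y - x) < d -> P y.
Proof. intros [d Hd]; exists d; split; [apply cond_pos|]. intros y Hy; apply Hd; exact Hy. Qed.

Lemma loc_mk (P : R -> Prop) x : (exists d, 0 < d /\ forall y, Rabs (y - x) < d -> P y) -> locally x P.
Proof. intros [d [Hd H]]; exists (mkposreal d Hd); intros y Hy; apply H; exact Hy. Qed.

Lemma Int_part_eq x n : IZR n <= x < IZR n + 1 -> Int_part x = n.
Proof. intros [H1 H2]. destruct (base_Int_part x) as [H3 H4].
  assert (A1 : IZR (Int_part x - n) < 1) by (rewrite minus_IZR; lra).
  assert (A2 : -1 < IZR (Int_part x - n)) by (rewrite minus_IZR; lra).
  apply lt_IZR in A1; apply lt_IZR in A2; lia. Qed.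

Lemma redpi_0 y : - PI <= y < PI -> redpi y = y.
Proof. intros H; unfold redpi. pose proof PI_RGT_0.
  rewrite (Int_part_eq _ 0); [simpl; ring|]. simpl.
  split; [apply Rmult_le_pos; [lra|left; apply Rinv_0_lt_compat; lra]|].
  apply (Rmult_lt_reg_r (2*PI)); [lra|]. field_simplify; lra. Qed.

Lemma redpi_1 y : PI <= y < 3 * PI -> redpi y = y - 2 * PI.
Proof. intros H; unfold redpi. pose proof PI_RGT_0.
  rewrite (Int_part_eq _ 1); [simpl; ring|]. simpl.
  split; apply (Rmult_le_reg_r (2*PI)) || apply (Rmult_lt_reg_r (2*PI)); try lra;
  field_simplify; lra. Qed.

Lemma redpi_m1 y : - 3 * PI <= y < - PI -> redpi y = y + 2 * PI.
Proof. intros H; unfold redpi. pose proof PI_RGT_0.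
  rewrite (Int_part_eq _ (-1)); [simpl; ring|]. simpl.
  split; apply (Rmult_le_reg_r (2*PI)) || apply (Rmult_lt_reg_r (2*PI)); try lra;
  field_simplify; lra. Qed.


Definition Hth (theta : R -> R) (w0 : R) := (forall x, theta (- x) = - theta x) /\ (forall x, ex_derive theta x) /\
  (forall x, ex_derive (Derive theta) x) /\ (forall x, x > PI / 3 -> theta x = PI / 4) /\ PI / 3 <= w0 < PI / 2.

Definition aa w0 := PI / (3 * (PI - 2 * w0)).
Definition gg theta w0 v := cos (PI/4 + theta (aa w0 * (v - PI))).

Section S.
Variables (theta : R -> R) (w0 : R).

Lemma theta_top : Hth theta w0 -> forall x, x >= PI / 3 -> theta x = PI / 4.
Proof.
  intros (Hodd & Hd & _ & Htop & _) x Hx. destruct Hx as [Hx|Hx]; [apply Htop; lra|]. subst x.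
  destruct (Req_dec (theta (PI/3)) (PI/4)) as [E|E]; auto. exfalso.
  assert (Hc := proj2 (continuity_pt_filterlim _ _) (exd_cont _ _ (Hd (PI/3)))).
  destruct (proj1 (continuity_pt_locally _ _) Hc (mkposreal _ (Rabs_pos_lt (theta (PI/3) - PI/4) ltac:(lra))))
    as [d Hdd].
  assert (Hy : ball (PI/3) d (PI/3 + d/2)).
  { unfold ball; simpl; unfold AbsRing_ball, abs, minus, plus, opp; simpl.
    pose proof (cond_pos d). rewrite Rabs_right; lra. }
  specialize (Hdd _ Hy); simpl in Hdd. rewrite Htop in Hdd by (pose proof (cond_pos d); lra).
  rewrite <- Rabs_Ropp in Hdd. replace (- (PI / 4 - theta (PI / 3))) with (theta (PI/3) - PI/4) in Hdd by ring.
  lra.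
Qed.

Lemma theta_bot : Hth theta w0 -> forall x, x <= - PI / 3 -> theta x = - (PI / 4).
Proof. intros H x Hx. replace x with (- (- x)) by ring. destruct H as [Hodd HH].
  rewrite Hodd, (theta_top (conj Hodd HH)); auto; lra. Qed.

Lemma aa_pos : Hth theta w0 -> 0 < aa w0.
Proof. intros (_&_&_&_&Hw). unfold aa. pose proof PI_RGT_0. apply Rdiv_lt_0_compat; lra. Qed.

Lemma gg_1 : Hth theta w0 -> forall v, v <= 2 * w0 -> gg theta w0 v = 1.
Proof. intros H v Hv. unfold gg. pose proof (aa_pos H). pose proof PI_RGT_0.
  assert (Hw := proj2 (proj2 (proj2 (proj2 H)))).
  rewrite (theta_bot H). { replace (PI / 4 + - (PI / 4)) with 0 by ring; apply cos_0. }
  assert (E : aa w0 * (2 * w0 - PI) = - PI / 3) by (unfold aa; field; lra).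
  assert (aa w0 * (v - PI) <= aa w0 * (2 * w0 - PI)) by (apply Rmult_le_compat_l; lra). lra.
Qed.

Lemma gg_0 : Hth theta w0 -> forall v, v >= 2 * PI - 2 * w0 -> gg theta w0 v = 0.
Proof. intros H v Hv. unfold gg. pose proof (aa_pos H). pose proof PI_RGT_0.
  assert (Hw := proj2 (proj2 (proj2 (proj2 H)))).
  rewrite (theta_top H). { replace (PI / 4 + (PI / 4)) with (PI/2) by field; apply cos_PI2. }
  assert (E : aa w0 * (2 * PI - 2 * w0 - PI) = PI / 3) by (unfold aa; field; lra).
  assert (aa w0 * (v - PI) >= aa w0 * (2 * PI - 2 * w0 - PI)) by (apply Rmult_ge_compat_l; lra). lra.
Qed.

Lemma phiM_gg : Hth theta w0 -> forall w, phiM theta w0 w = gg theta w0 (Rabs w).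
Proof. intros H w. unfold phiM.
  destruct (Rle_dec (Rabs w) (2 * w0)) as [H1|H1]; [rewrite gg_1; auto|].
  destruct (Rle_dec (Rabs w) (2 * PI - 2 * w0)) as [H2|H2]; [reflexivity|].
  rewrite gg_0; auto; lra. Qed.

Lemma C1_theta : Hth theta w0 -> C1 theta.
Proof. intros (_&Hd&Hdd&_) y; split; auto. apply exd_cont; auto. Qed.

Lemma C1_gg_lin : Hth theta w0 -> forall c, C1 (fun y => gg theta w0 (c * y)).
Proof. intros H c. unfold gg.
  apply (C1_comp cos (fun y => PI / 4 + theta (aa w0 * (c * y - PI)))); [apply C1_cos|].
  apply (C1_plus (fun _ => PI/4) (fun y => theta (aa w0 * (c * y - PI)))); [apply C1_const|].
  apply (C1_comp theta (fun y => aa w0 * (c * y - PI))); [apply C1_theta; auto|].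
  replace (fun y => aa w0 * (c * y - PI)) with (fun y => (aa w0 * c) * y + (- aa w0 * PI))
    by (apply functional_extensionality; intros; ring).
  apply C1_affine.
Qed.

Lemma gg_le1 : forall v, Rabs (gg theta w0 v) <= 1.
Proof. intros; unfold gg; apply Rabs_le; apply COS_bound. Qed.

End S.

Ltac rabs := unfold Rabs in *; repeat match goal with
  | H : context [Rcase_abs ?x] |- _ => destruct (Rcase_abs x)
  | |- context [Rcase_abs ?x] => destruct (Rcase_abs x) end; try lra.

Section S2.
Variables (theta : R -> R) (w0 : R).
Hypothesis H : Hth theta w0.
Let Hw : PI / 3 <= w0 < PI / 2 := proj2 (proj2 (proj2 (proj2 H))).

Lemma mM_gg y : mM theta w0 y = gg theta w0 (Rabs (2 * redpi y)).
Proof. unfold mM; apply phiM_gg; auto. Qed.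

Lemma mM_in y : - PI <= y <= PI -> mM theta w0 y = gg theta w0 (Rabs (2 * y)).
Proof. intros Hy. rewrite mM_gg. pose proof PI_RGT_0.
  destruct (Rle_lt_or_eq_dec y PI (proj2 Hy)) as [E|E].
  - rewrite redpi_0 by lra. auto.
  - subst y. rewrite redpi_1 by lra. f_equal. rabs. Qed.

Lemma mM_0 : mM theta w0 0 = 1.
Proof. rewrite mM_in; [|pose proof PI_RGT_0; lra]. apply gg_1; auto. rabs. Qed.

Lemma mM_le1 y : Rabs (mM theta w0 y) <= 1.
Proof. rewrite mM_gg; apply gg_le1. Qed.

Lemma mM_edge y : - PI <= y <= PI -> Rabs y > PI - w0 -> mM theta w0 y = 0.
Proof. intros Hy Ha. rewrite mM_in; auto. apply gg_0; auto. rabs. Qed.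

Lemma mM_zero_pi y : Rabs (y - PI) < w0 -> mM theta w0 y = 0.
Proof. intros Hy. pose proof PI_RGT_0. rewrite mM_gg. apply gg_0; auto.
  destruct (Rlt_dec y PI).
  - rewrite redpi_0 by rabs. rabs.
  - rewrite redpi_1 by rabs. rabs. Qed.

Lemma mM_zero_mpi y : Rabs (y + PI) < w0 -> mM theta w0 y = 0.
Proof. intros Hy. pose proof PI_RGT_0. rewrite mM_gg. apply gg_0; auto.
  destruct (Rlt_dec y (- PI)).
  - rewrite redpi_m1 by rabs. rabs.
  - rewrite redpi_0 by rabs. rabs. Qed.

Lemma LC1_mM x : - PI <= x <= PI -> LC1 (mM theta w0) x.
Proof.
  intros Hx. pose proof PI_RGT_0.
  destruct (Rle_lt_or_eq_dec x PI (proj2 Hx)) as [E|E].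
  2:{ subst x. apply (LC1_ext _ (fun _ => 0)); [|apply C1_LC1, C1_const].
    apply loc_mk; exists w0; split; [lra|]. intros; apply mM_zero_pi; auto. }
  destruct (Rle_lt_or_eq_dec (-PI) x (proj1 Hx)) as [E'|E'].
  2:{ subst x. apply (LC1_ext _ (fun _ => 0)); [|apply C1_LC1, C1_const].
    apply loc_mk; exists w0; split; [lra|]. intros y Hy; apply mM_zero_mpi; auto.
    replace (y + PI) with (y - - PI) by ring; auto. }
  destruct (Rtotal_order x 0) as [Hn|[Hz|Hp]].
  - apply (LC1_ext _ (fun y => gg theta w0 (-2 * y))); [|apply C1_LC1, C1_gg_lin; auto].
    apply loc_mk; exists (Rmin (-x) (x + PI)); split; [apply Rmin_pos; lra|].
    intros y Hy. assert (Hm1 := Rmin_l (-x) (x+PI)). assert (Hm2 := Rmin_r (-x) (x+PI)).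
    rewrite mM_in by rabs. f_equal. rabs.
  - subst x. apply (LC1_ext _ (fun _ => 1)); [|apply C1_LC1, C1_const].
    apply loc_mk; exists w0; split; [lra|]. intros y Hy. rewrite mM_in by rabs.
    apply gg_1; auto. rabs.
  - apply (LC1_ext _ (fun y => gg theta w0 (2 * y))); [|apply C1_LC1, C1_gg_lin; auto].
    apply loc_mk; exists (Rmin x (PI - x)); split; [apply Rmin_pos; lra|].
    intros y Hy. assert (Hm1 := Rmin_l x (PI - x)). assert (Hm2 := Rmin_r x (PI-x)).
    rewrite mM_in by rabs. f_equal. rabs.
Qed.

End S2.


Lemma is_derive_sum (F dF : nat -> R -> R) w n :
  (forall k, is_derive (F k) w (dF k w)) ->
  is_derive (fun x => sum_n_m (fun k => F k x) 1 n) w (sum_n_m (fun k => dF k w) 1 n).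
Proof.
  intros HF. induction n as [|n IH].
  - apply (is_derive_ext (fun _ => 0)).
    + intros t; rewrite sum_n_m_zero; auto.
    + rewrite sum_n_m_zero; auto. apply (is_derive_const 0).
  - apply (is_derive_ext (fun x => sum_n_m (fun k => F k x) 1 n + F (S n) x)).
    + intros t; rewrite sum_n_Sm; [reflexivity|lia].
    + rewrite sum_n_Sm; [|lia]. apply (is_derive_plus (fun x => sum_n_m (fun k => F k x) 1 n) (F (S n))); auto.
Qed.

Lemma cont_cosk k x : continuous (fun t => cos (INR k * t)) x.
Proof. apply exd_cont. auto_derive; auto. Qed.
Lemma cont_sink k x : continuous (fun t => sin (INR k * t)) x.
Proof. apply exd_cont. auto_derive; auto. Qed.

Section F.
Variable f : R -> R.
Hypothesis Hf : forall x, - PI <= x <= PI -> LC1 f x.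
Hypothesis Hp : f PI = 0.
Hypothesis Hm : f (- PI) = 0.

Lemma Hf_ex x : - PI <= x <= PI -> ex_derive f x.
Proof. intros H; apply locally_singleton, (proj1 (Hf x H)). Qed.

Lemma mm_range x : Rmin (-PI) PI <= x <= Rmax (-PI) PI -> - PI <= x <= PI.
Proof. pose proof PI_RGT_0. rewrite Rmin_left, Rmax_right by lra; auto. Qed.

Lemma exRI (g : R -> R) : (forall x, - PI <= x <= PI -> continuous g x) -> is_RInt g (- PI) PI (RInt g (-PI) PI).
Proof. intros H; apply (RInt_correct (V:=R_CompleteNormedModule)), (ex_RInt_continuous (V:=R_CompleteNormedModule)); intros z Hz; apply H, mm_range, Hz. Qed.

Lemma ibp (c s : R -> R) :
  (forall x, is_derive c x (s x)) -> (forall x, continuous c x) -> (forall x, continuous s x) ->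
  RInt (fun t => Derive f t * c t) (- PI) PI = - RInt (fun t => f t * s t) (- PI) PI.
Proof.
  intros Hd Hcc Hsc.
  assert (Hfc : forall x, - PI <= x <= PI -> continuous f x) by (intros; apply exd_cont, Hf_ex; auto).
  assert (E1 : is_RInt (fun t => Derive f t * c t + f t * s t) (- PI) PI 0).
  { replace 0 with (minus (f PI * c PI) (f (-PI) * c (-PI))) by (rewrite Hp, Hm; unfold minus, plus, opp; simpl; ring).
    apply (is_RInt_derive (fun t => f t * c t)).
    - intros x Hx. apply mm_range in Hx. apply (is_derive_mult f c); auto.
      + apply Derive_correct, Hf_ex; auto.
      + intros; simpl; apply Rmult_comm.
    - intros x Hx. apply mm_range in Hx.
      apply (continuous_plus (fun t => Derive f t * c t) (fun t => f t * s t)).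
      + apply (continuous_mult (fun t => Derive f t) c); auto. apply (Hf x Hx).
      + apply (continuous_mult f s); auto. }
  assert (E2 := exRI (fun t => Derive f t * c t) ltac:(intros x Hx; apply (continuous_mult (fun t => Derive f t) c); auto; apply (Hf x Hx))).
  assert (E3 := exRI (fun t => f t * s t) ltac:(intros x Hx; apply (continuous_mult f s); auto)).
  assert (E4 : is_RInt (fun t => Derive f t * c t + f t * s t) (- PI) PI
     (RInt (fun t => Derive f t * c t) (- PI) PI + RInt (fun t => f t * s t) (- PI) PI))
   by exact (is_RInt_plus _ _ _ _ _ _ E2 E3).
  assert (U := is_RInt_unique _ _ _ _ E1). rewrite (is_RInt_unique _ _ _ _ E4) in U. lra.
Qed.

Lemma RInt_lin (g : R -> R) (c : R) : (forall x, - PI <= x <= PI -> continuous g x) ->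
  RInt (fun t => c * g t) (- PI) PI = c * RInt g (- PI) PI.
Proof. intros H. assert (E := exRI g H).
  assert (E' : is_RInt (fun t => c * g t) (- PI) PI (c * RInt g (- PI) PI)) by exact (is_RInt_scal _ _ _ c _ E).
  apply (is_RInt_unique _ _ _ _ E'). Qed.

Lemma fcont x : - PI <= x <= PI -> continuous f x.
Proof. intros; apply exd_cont, Hf_ex; auto. Qed.

Lemma fa_D k : fa (Derive f) k = INR k * fb f k.
Proof.
  unfold fa, fb. rewrite (ibp (fun t => cos (INR k * t)) (fun t => - (INR k * sin (INR k * t)))).
  - rewrite (RInt_ext _ (fun t => (- INR k) * (f t * sin (INR k * t)))).
    + rewrite RInt_lin; [ring|]. intros; apply (continuous_mult f); [apply fcont; auto|apply cont_sink].
    + intros x Hx. change (f x * - (INR k * sin (INR k * x)) = - INR k * (f x * sin (INR k * x))). ring.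
  - intros x; auto_derive; auto; ring.
  - intros; apply cont_cosk.
  - intros x. apply (continuous_opp (fun t => INR k * sin (INR k * t))).
    apply (continuous_mult (fun _ => INR k)); [apply continuous_const|apply cont_sink].
Qed.

Lemma fb_D k : fb (Derive f) k = - INR k * fa f k.
Proof.
  unfold fa, fb. rewrite (ibp (fun t => sin (INR k * t)) (fun t => INR k * cos (INR k * t))).
  - rewrite (RInt_ext _ (fun t => (INR k) * (f t * cos (INR k * t)))).
    + rewrite RInt_lin; [ring|]. intros; apply (continuous_mult f); [apply fcont; auto|apply cont_cosk].
    + intros x Hx. change (f x * (INR k * cos (INR k * x)) = INR k * (f x * cos (INR k * x))). ring.
  - intros x; auto_derive; auto; ring.
  - intros; apply cont_sink.
  - intros x. apply (continuous_mult (fun _ => INR k)); [apply continuous_const|apply cont_cosk].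
Qed.

Lemma usum_D lam n w : is_derive (usum lam n f) w (usum lam n (Derive f) w).
Proof.
  unfold usum. rewrite fa_D. simpl (INR 0). rewrite Rmult_0_l.
  apply (is_derive_ext (fun x => fa f 0 / 2 + sum_n_m (fun k => lam n k * (fa f k * cos (INR k * x) + fb f k * sin (INR k * x))) 1 n)); [reflexivity|].
  replace (0 / 2 + _) with (0 + sum_n_m (fun k => lam n k * (fa f k * (- (INR k * sin (INR k * w))) + fb f k * (INR k * cos (INR k * w)))) 1 n).
  - apply (is_derive_plus (fun _ => fa f 0 / 2)); [apply (is_derive_const (fa f 0 / 2))|].
    apply (is_derive_sum (fun k x => lam n k * (fa f k * cos (INR k * x) + fb f k * sin (INR k * x)))
       (fun k x => lam n k * (fa f k * (- (INR k * sin (INR k * x))) + fb f k * (INR k * cos (INR k * x))))).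
    intros k; auto_derive; auto; ring.
  - f_equal; [field|]. apply sum_n_m_ext; intros k. rewrite fa_D, fb_D. apply Rminus_diag_uniq. ring.
Qed.

End F.


Lemma abs_pow_le1 x n : Rabs x <= 1 -> Rabs (x ^ n) <= 1.
Proof. intros H. rewrite <- RPow_abs. rewrite <- (pow1 n). apply pow_incr. split; [apply Rabs_pos|auto]. Qed.

Lemma C1_Q l : C1 (fun y => cos (y / 2) ^ (2 * l)).
Proof. apply (C1_pow (fun y => cos (y / 2))).
  apply (C1_comp cos (fun y => y / 2)); [apply C1_cos|].
  replace (fun y => y / 2) with (fun y => (/2) * y + 0) by (apply functional_extensionality; intros; field).
  apply C1_affine. Qed.

Lemma Qpos l y : - PI < y < PI -> 0 < cos (y / 2) ^ (2 * l).
Proof. intros H. apply pow_lt, cos_gt_0; lra. Qed.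

Section S3.
Variables (theta : R -> R) (w0 : R).
Hypothesis H : Hth theta w0.
Let Hw : PI / 3 <= w0 < PI / 2 := proj2 (proj2 (proj2 (proj2 H))).

Lemma mM_pi : mM theta w0 PI = 0.
Proof. apply mM_zero_pi; auto. rewrite Rminus_diag, Rabs_R0; lra. Qed.
Lemma mM_mpi : mM theta w0 (- PI) = 0.
Proof. apply mM_zero_mpi; auto. rewrite Rplus_opp_l, Rabs_R0; lra. Qed.

Lemma mMl_pi l : mMl theta w0 l PI = 0.
Proof. unfold mMl; rewrite mM_pi; unfold Rdiv; ring. Qed.
Lemma mMl_mpi l : mMl theta w0 l (- PI) = 0.
Proof. unfold mMl; rewrite mM_mpi; unfold Rdiv; ring. Qed.
Lemma mMl_0 l : mMl theta w0 l 0 = 1.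
Proof. unfold mMl; rewrite mM_0 by auto. unfold Rdiv; rewrite Rmult_0_l, cos_0, pow1; field. Qed.

Lemma LC1_mMl l x : - PI <= x <= PI -> LC1 (mMl theta w0 l) x.
Proof.
  intros Hx. pose proof PI_RGT_0.
  destruct (Rle_lt_or_eq_dec x PI (proj2 Hx)) as [E|E].
  2:{ subst x. apply (LC1_ext _ (fun _ => 0)); [|apply C1_LC1, C1_const].
    apply loc_mk; exists w0; split; [lra|]. intros y Hy; unfold mMl; rewrite mM_zero_pi; auto; unfold Rdiv; ring. }
  destruct (Rle_lt_or_eq_dec (-PI) x (proj1 Hx)) as [E'|E'].
  2:{ subst x. apply (LC1_ext _ (fun _ => 0)); [|apply C1_LC1, C1_const].
    apply loc_mk; exists w0; split; [lra|]. intros y Hy; unfold mMl; rewrite mM_zero_mpi; auto; [unfold Rdiv; ring|].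
    replace (y + PI) with (y - - PI) by ring; auto. }
  apply (LC1_div (mM theta w0) (fun y => cos (y / 2) ^ (2 * l))).
  - apply LC1_mM; auto.
  - apply C1_Q.
  - apply Rgt_not_eq, Qpos; lra.
Qed.

Lemma ul_D lam nl l w : is_derive (ul theta w0 lam nl l) w (u1l theta w0 lam nl l w).
Proof. unfold ul, u1l. apply usum_D.
  - apply LC1_mMl.
  - apply mMl_pi.
  - apply mMl_mpi. Qed.

End S3.


Lemma sup_le f b : (forall x, - PI <= x <= PI -> Rabs (f x) <= b) -> supC f <= b.
Proof.
  intros Hb. pose proof PI_RGT_0.
  assert (b0 : 0 <= b) by (apply Rle_trans with (Rabs (f 0)); [apply Rabs_pos|apply Hb; lra]).
  unfold supC. destruct (Lub_Rbar_correct (fun y => exists x, - PI <= x <= PI /\ y = Rabs (f x))) as [Hub Hlub].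
  assert (Hu : is_ub_Rbar (fun y => exists x, - PI <= x <= PI /\ y = Rabs (f x)) b).
  { intros y [x [Hx ->]]. simpl. apply Hb; auto. }
  specialize (Hlub _ Hu).
  destruct (Lub_Rbar _); simpl in *; auto; contradiction.
Qed.

Lemma sup_ge f : (forall x, - PI <= x <= PI -> continuous f x) -> forall x, - PI <= x <= PI -> Rabs (f x) <= supC f.
Proof.
  intros Hc x Hx. pose proof PI_RGT_0.
  destruct (bounded_continuity (K:=R_AbsRing) (V:=R_NormedModule) f (-PI) PI Hc) as [M HM].
  unfold supC. destruct (Lub_Rbar_correct (fun y => exists x, - PI <= x <= PI /\ y = Rabs (f x))) as [Hub Hlub].
  assert (Hu : is_ub_Rbar (fun y => exists x, - PI <= x <= PI /\ y = Rabs (f x)) M).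
  { intros y [z [Hz ->]]. simpl. left; apply (HM z Hz). }
  specialize (Hlub _ Hu).
  assert (Hx' := Hub (Rabs (f x)) (ex_intro _ x (conj Hx eq_refl))).
  destruct (Lub_Rbar _); simpl in *; auto; contradiction.
Qed.

Lemma sup_nonneg f : 0 <= supC f.
Proof.
  pose proof PI_RGT_0.
  unfold supC. destruct (Lub_Rbar_correct (fun y => exists x, - PI <= x <= PI /\ y = Rabs (f x))) as [Hub Hlub].
  assert (Hin : exists x, - PI <= x <= PI /\ Rabs (f 0) = Rabs (f x)) by (exists 0; split; [lra|auto]).
  assert (Hx' := Hub (Rabs (f 0)) Hin).
  destruct (Lub_Rbar _); simpl in *; try lra. apply Rle_trans with (Rabs (f 0)); auto; apply Rabs_pos.
Qed.

Lemma usum_exd lam n g w : ex_derive (usum lam n g) w.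
Proof.
  eexists. unfold usum.
  apply (is_derive_plus (fun _ => fa g 0 / 2)); [apply (is_derive_const (fa g 0 / 2))|].
  apply (is_derive_sum (fun k x => lam n k * (fa g k * cos (INR k * x) + fb g k * sin (INR k * x)))
       (fun k x => lam n k * (fa g k * (- (INR k * sin (INR k * x))) + fb g k * (INR k * cos (INR k * x))))).
  intros k; auto_derive; auto; ring.
Qed.

Lemma usum_cont lam n g w : continuous (usum lam n g) w.
Proof. apply exd_cont, usum_exd. Qed.


Lemma dml theta w0 lam nl l w : Hth theta w0 ->
  is_derive (ml theta w0 lam nl l) w
   ((INR (2 * l) * (- (sin (w / 2) * / 2)) * cos (w / 2) ^ pred (2 * l) * ul theta w0 lam nl l w
     + cos (w / 2) ^ (2 * l) * u1l theta w0 lam nl l w) / ul theta w0 lam nl l 0).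
Proof. intros H. unfold ml.
  assert (HD := ul_D theta w0 H lam nl l w).
  auto_derive.
  - eexists; exact HD.
  - replace (Derive (fun x => ul theta w0 lam nl l x) w) with (u1l theta w0 lam nl l w)
      by (symmetry; apply is_derive_unique; exact HD).
    replace (l + (l + 0))%nat with (2 * l)%nat by lia. unfold Rdiv. ring.
Qed.

Lemma dP l w : is_derive (fun y => cos (y / 2) ^ (2 * l)) w
   (INR (2 * l) * (- (sin (w / 2) * / 2)) * cos (w / 2) ^ pred (2 * l)).
Proof. auto_derive; auto. replace (l + (l + 0))%nat with (2 * l)%nat by lia. unfold Rdiv. ring. Qed.


Lemma combine (D dPv Mw P u u1 M' u0 a g c0 c1 M0 lr : R) :
 D = dPv*(u-Mw)/u0 + dPv*Mw*(1-u0)/u0 + P*(u1-M')/u0 + P*M'*(1-u0)/u0 ->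
 0 < c0 -> c0 <= Rabs u0 -> Rabs (u - Mw) <= a -> Rabs (1-u0) <= a -> Rabs (u1 - M') <= g ->
 Rabs dPv <= lr -> Rabs (dPv*Mw) <= lr/c1 -> Rabs P <= 1 -> Rabs (P*M') <= M0 + lr/c1 ->
 0 < c1 -> 0 <= M0 -> 1 <= lr -> 0 <= a -> 0 <= g ->
 Rabs D <= (2 + 2/c1 + M0)/c0 * (lr*a + g).
Proof.
  intros HD Hc0 Hu0 Ha H1 Hg HdP HdPM HP HPM Hc1 HM0 Hlr Ha0 Hg0.
  assert (u0n : u0 <> 0) by (intros E; rewrite E, Rabs_R0 in Hu0; lra).
  set (iu := / Rabs u0).
  assert (Hiu : iu <= / c0) by (apply Rinv_le_contravar; lra).
  assert (Hiu0 : 0 < iu) by (apply Rinv_0_lt_compat; lra).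
  assert (R : forall x, Rabs (x / u0) = Rabs x * iu) by (intros; unfold Rdiv; rewrite Rabs_mult, Rabs_inv; auto).
  assert (T1 : Rabs (dPv*(u-Mw)/u0) <= lr * a * iu).
  { rewrite R, Rabs_mult. apply Rmult_le_compat_r; [lra|]. apply Rmult_le_compat; auto using Rabs_pos. }
  assert (T2 : Rabs (dPv*Mw*(1-u0)/u0) <= lr / c1 * a * iu).
  { rewrite R, Rabs_mult. apply Rmult_le_compat_r; [lra|]. apply Rmult_le_compat; auto using Rabs_pos. }
  assert (T3 : Rabs (P*(u1-M')/u0) <= g * iu).
  { rewrite R, Rabs_mult. apply Rmult_le_compat_r; [lra|].
    replace g with (1 * g) by ring. apply Rmult_le_compat; auto using Rabs_pos. }
  assert (T4 : Rabs (P*M'*(1-u0)/u0) <= (M0 + lr/c1) * a * iu).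
  { rewrite R, Rabs_mult. apply Rmult_le_compat_r; [lra|]. apply Rmult_le_compat; auto using Rabs_pos. }
  assert (S : Rabs D <= (lr*a + lr/c1*a + g + (M0 + lr/c1)*a) * iu).
  { rewrite HD. eapply Rle_trans; [apply Rabs_triang|].
    eapply Rle_trans; [apply Rplus_le_compat_r, Rabs_triang|].
    eapply Rle_trans; [apply Rplus_le_compat_r, Rplus_le_compat_r, Rabs_triang|]. lra. }
  assert (lc : 0 <= lr / c1) by (unfold Rdiv; apply Rmult_le_pos; [lra|left; apply Rinv_0_lt_compat; lra]).
  assert (S2 : lr*a + lr/c1*a + g + (M0 + lr/c1)*a <= (2 + 2/c1 + M0) * (lr*a + g)).
  { assert (lr / c1 = lr * / c1) by reflexivity. assert (2 / c1 = 2 * / c1) by reflexivity.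
    assert (0 < / c1) by (apply Rinv_0_lt_compat; lra).
    assert (M0 * a <= M0 * (lr * a)) by (apply Rmult_le_compat_l; nra).
    assert (0 <= /c1 * lr * a) by (repeat apply Rmult_le_pos; lra).
    assert (0 <= /c1 * g) by (apply Rmult_le_pos; lra).
    assert (0 <= M0 * g) by (apply Rmult_le_pos; lra).
    nra. }
  eapply Rle_trans; [exact S|].
  assert (X0 : 0 <= lr*a + lr/c1*a + g + (M0 + lr/c1)*a).
  { apply Rplus_le_le_0_compat; [|nra]. apply Rplus_le_le_0_compat; [|lra].
    apply Rplus_le_le_0_compat; nra. }
  apply Rle_trans with ((lr*a + lr/c1*a + g + (M0 + lr/c1)*a) * / c0); [apply Rmult_le_compat_l; auto|].
  replace ((2 + 2/c1 + M0)/c0 * (lr*a + g)) with (((2 + 2/c1 + M0) * (lr*a + g)) * / c0) by (unfold Rdiv; ring).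
  apply Rmult_le_compat_r; [left; apply Rinv_0_lt_compat; lra|auto].
Qed.


Lemma cont_minus (f g : R -> R) x : continuous f x -> continuous g x -> continuous (fun y => f y - g y) x.
Proof. intros Hf Hg. apply (continuous_plus f (fun y => opp (g y))); auto. apply (continuous_opp g); auto. Qed.

Lemma cos_ge x y : 0 <= x -> x <= y -> y <= PI -> cos y <= cos x.
Proof. intros. destruct (Req_dec x y) as [E|E]; [subst; lra|]. left; apply cos_decreasing_1; lra. Qed.

Lemma alg_id (dP u u1 M M' u0 P : R) : u0 <> 0 ->
  (dP * u + P * u1) / u0 - (dP * M + P * M') =
  dP * (u - M) / u0 + dP * M * (1 - u0) / u0 + P * (u1 - M') / u0 + P * M' * (1 - u0) / u0.
Proof. intros; field; auto. Qed.

Theorem lemma2 (theta : R -> R) (w0 : R) (lam : nat -> nat -> R) (nl : nat -> nat) (l0 : nat) :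
  (forall x, theta (- x) = - theta x) ->
  (forall x y, x <= y -> theta x <= theta y) ->
  (forall x, ex_derive theta x) ->
  (forall x, ex_derive (Derive theta) x) ->
  (forall x, continuous (Derive_n theta 2) x) ->
  (forall x, x > PI / 3 -> theta x = PI / 4) ->
  PI / 3 <= w0 < PI / 2 ->
  is_lim_seq (fun l => INR l * alpha theta w0 lam nl l) 0 ->
  is_lim_seq (gamma theta w0 lam nl) 0 ->
  (forall l, ul theta w0 lam nl l PI <> 0) ->
  (exists c, 0 < c /\ forall l, (l0 <= l)%nat -> c <= Rabs (ul theta w0 lam nl l 0)) ->
  exists K : R, exists L : nat, forall l, (L <= l)%nat ->
    supC (fun w => Derive (ml theta w0 lam nl l) w - Derive (mM theta w0) w)
      <= K * mu theta w0 lam nl l.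
Proof.
  intros Hodd Hmono Hd Hdd Hc2 Htop Hw Hla Hga Hpi [c0 [Hc0 Hu0]].
  assert (H : Hth theta w0) by (unfold Hth; tauto).
  pose proof PI_RGT_0.
  destruct (bounded_continuity (K:=R_AbsRing) (V:=R_NormedModule) (Derive (mM theta w0)) (-PI) PI) as [M0 HM0].
  { intros x Hx. apply (LC1_mM theta w0 H x Hx). }
  assert (HM0' : forall x, -PI <= x <= PI -> Rabs (Derive (mM theta w0) x) <= M0) by (intros; left; apply HM0; auto).
  assert (M0pos : 0 <= M0) by (apply Rle_trans with (Rabs (Derive (mM theta w0) 0)); [apply Rabs_pos|apply HM0'; lra]).
  set (c1 := cos ((PI - w0) / 2)).
  assert (c1pos : 0 < c1) by (apply cos_gt_0; lra).
  exists ((2 + 2/c1 + M0)/c0), (Nat.max l0 1).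
  intros l Hl.
  assert (Hl0 : (l0 <= l)%nat) by lia. assert (Hl1 : (1 <= l)%nat) by lia.
  assert (lr1 : 1 <= INR l) by (apply (le_INR 1); auto).
  assert (Hu0l := Hu0 l Hl0).
  assert (u0n : ul theta w0 lam nl l 0 <> 0) by (intros E; rewrite E, Rabs_R0 in Hu0l; lra).
  assert (Hal : forall x, -PI <= x <= PI -> Rabs (ul theta w0 lam nl l x - mMl theta w0 l x) <= alpha theta w0 lam nl l).
  { unfold alpha. apply (sup_ge (fun w => ul theta w0 lam nl l w - mMl theta w0 l w)).
    intros x Hx. apply cont_minus; [apply usum_cont|]. apply exd_cont.
    apply locally_singleton, (proj1 (LC1_mMl theta w0 H l x Hx)). }
  assert (Hga' : forall x, -PI <= x <= PI -> Rabs (u1l theta w0 lam nl l x - Derive (mMl theta w0 l) x) <= gamma theta w0 lam nl l).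
  { unfold gamma. apply (sup_ge (fun w => u1l theta w0 lam nl l w - Derive (mMl theta w0 l) w)).
    intros x Hx. apply cont_minus; [apply usum_cont|]. apply (LC1_mMl theta w0 H l x Hx). }
  assert (a0 : 0 <= alpha theta w0 lam nl l) by apply sup_nonneg.
  assert (g0 : 0 <= gamma theta w0 lam nl l) by apply sup_nonneg.
  assert (H1u0 : Rabs (1 - ul theta w0 lam nl l 0) <= alpha theta w0 lam nl l).
  { rewrite <- (mMl_0 theta w0 H l), Rabs_minus_sym. apply Hal; lra. }
  assert (K0 : 0 <= (2 + 2/c1 + M0)/c0).
  { assert (0 < /c1) by (apply Rinv_0_lt_compat; lra). assert (0 < /c0) by (apply Rinv_0_lt_compat; lra).
    unfold Rdiv. apply Rmult_le_pos; [|lra]. nra. }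
  assert (mu0 : 0 <= mu theta w0 lam nl l) by (unfold mu; nra).
  apply sup_le. intros w Hwr.
  assert (edge : forall w, (w = PI \/ w = - PI) ->
     Rabs (Derive (ml theta w0 lam nl l) w - Derive (mM theta w0) w) <= (2 + 2/c1 + M0)/c0 * mu theta w0 lam nl l).
  { intros v Hv.
    assert (cv : cos (v / 2) = 0).
    { destruct Hv as [->| ->]; [apply cos_PI2|]. replace (- PI / 2) with (- (PI / 2)) by field.
      rewrite cos_neg; apply cos_PI2. }
    rewrite (is_derive_unique _ _ _ (dml theta w0 lam nl l v H)).
    rewrite (Derive_ext_loc _ (fun _ => 0)).
    - rewrite Derive_const, cv, !pow_i by lia.
      match goal with |- Rabs ?e <= _ => replace e with 0 by (unfold Rdiv; ring) end.
      rewrite Rabs_R0. apply Rmult_le_pos; auto.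
    - apply loc_mk; exists w0; split; [lra|]. intros y Hy. destruct Hv as [->| ->].
      + apply mM_zero_pi; auto.
      + apply mM_zero_mpi; auto. replace (y + PI) with (y - - PI) by ring; auto. }
  destruct (Rle_lt_or_eq_dec w PI (proj2 Hwr)) as [E1|E1]; [|apply edge; auto].
  destruct (Rle_lt_or_eq_dec (-PI) w (proj1 Hwr)) as [E2|E2]; [|apply edge; auto].
  set (dPv := INR (2 * l) * (- (sin (w / 2) * / 2)) * cos (w / 2) ^ pred (2 * l)).
  assert (cpos : 0 < cos (w / 2)) by (apply cos_gt_0; lra).
  assert (cnpos : 0 < cos (w / 2) ^ pred (2 * l)) by (apply pow_lt; lra).
  assert (Pe : cos (w / 2) ^ (2 * l) = cos (w / 2) * cos (w / 2) ^ pred (2 * l)).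
  { rewrite tech_pow_Rmult. f_equal. lia. }
  assert (HDml := is_derive_unique _ _ _ (dml theta w0 lam nl l w H)).
  assert (exM : ex_derive (mMl theta w0 l) w) by
    (apply locally_singleton, (proj1 (LC1_mMl theta w0 H l w Hwr))).
  assert (HDmM : Derive (mM theta w0) w = dPv * mMl theta w0 l w + cos (w / 2) ^ (2 * l) * Derive (mMl theta w0 l) w).
  { rewrite (Derive_ext_loc _ (fun y => cos (y / 2) ^ (2 * l) * mMl theta w0 l y)).
    - rewrite (Derive_mult (fun y => cos (y / 2) ^ (2 * l)) (mMl theta w0 l)); auto.
      + f_equal. f_equal. unfold dPv. apply (is_derive_unique _ _ _ (dP l w)).
      + eexists; apply dP.
    - apply loc_mk; exists (Rmin (w + PI) (PI - w)); split; [apply Rmin_pos; lra|].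
      intros y Hy. assert (Hm1 := Rmin_l (w + PI) (PI - w)). assert (Hm2 := Rmin_r (w + PI) (PI - w)).
      assert (Qy : 0 < cos (y / 2) ^ (2 * l)) by (apply Qpos; rabs).
      unfold mMl. field. lra. }
  assert (HdP : Rabs dPv <= INR l).
  { assert (E : dPv = - (INR l * (sin (w / 2) * cos (w / 2) ^ pred (2 * l)))).
    { unfold dPv. rewrite mult_INR. simpl (INR 2). field. }
    rewrite E, Rabs_Ropp, Rabs_mult, (Rabs_pos_eq (INR l)) by lra.
    rewrite <- (Rmult_1_r (INR l)) at 2. apply Rmult_le_compat_l; [lra|].
    rewrite Rabs_mult. rewrite <- (Rmult_1_r 1). apply Rmult_le_compat; try apply Rabs_pos.
    - apply Rabs_le, SIN_bound.
    - apply abs_pow_le1, Rabs_le, COS_bound. }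
  assert (HdPM : Rabs (dPv * mMl theta w0 l w) <= INR l / c1).
  { assert (lc : 0 <= INR l / c1) by (unfold Rdiv; apply Rmult_le_pos; [lra|left; apply Rinv_0_lt_compat; lra]).
    destruct (Rle_dec (Rabs w) (PI - w0)) as [Hin|Hout].
    - assert (cc1 : c1 <= cos (w / 2)).
      { unfold c1. destruct (Rle_dec 0 w).
        + apply cos_ge; rabs.
        + rewrite <- (cos_neg (w / 2)). apply cos_ge; rabs. }
      assert (E : dPv * mMl theta w0 l w = - (INR l * sin (w / 2) * mM theta w0 w) / cos (w / 2)).
      { unfold dPv, mMl. rewrite Pe, mult_INR. simpl (INR 2). field. lra. }
      rewrite E. rewrite Rabs_div by lra. rewrite Rabs_Ropp, !Rabs_mult, (Rabs_pos_eq (INR l)) by lra.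
      rewrite (Rabs_pos_eq (cos (w / 2))) by lra.
      apply Rmult_le_compat; try apply Rabs_pos; try (left; apply Rinv_0_lt_compat; lra).
      + repeat apply Rmult_le_pos; try apply Rabs_pos; lra.
      + rewrite <- (Rmult_1_r (INR l)) at 2. rewrite Rmult_assoc. apply Rmult_le_compat_l; [lra|].
        rewrite <- (Rmult_1_r 1). apply Rmult_le_compat; try apply Rabs_pos.
        * apply Rabs_le, SIN_bound.
        * apply (mM_le1 theta w0 H).
      + apply Rinv_le_contravar; lra.
    - unfold mMl. rewrite mM_edge; auto; [|lra]. unfold Rdiv. rewrite Rmult_0_l, Rmult_0_r, Rabs_R0. exact lc. }
  assert (HP : Rabs (cos (w / 2) ^ (2 * l)) <= 1) by (apply abs_pow_le1, Rabs_le, COS_bound).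
  assert (HPM : Rabs (cos (w / 2) ^ (2 * l) * Derive (mMl theta w0 l) w) <= M0 + INR l / c1).
  { replace (cos (w / 2) ^ (2 * l) * Derive (mMl theta w0 l) w) with
      (Derive (mM theta w0) w + - (dPv * mMl theta w0 l w)) by (rewrite HDmM; ring).
    eapply Rle_trans; [apply Rabs_triang|]. rewrite Rabs_Ropp. apply Rplus_le_compat; auto. }
  unfold mu.
  apply (combine _ dPv (mMl theta w0 l w) (cos (w / 2) ^ (2 * l)) (ul theta w0 lam nl l w) (u1l theta w0 lam nl l w)
     (Derive (mMl theta w0 l) w) (ul theta w0 lam nl l 0)); auto.
  rewrite HDml, HDmM. apply alg_id; auto.
Qed.
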